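(* Under the standing assumptions below, the map $\theta\mapsto-\bar g(\theta)$ is a gradient splitting of the quadratic $$f(\theta)=(1-\gamma)\|V_\theta-V_{\theta^*}\|_D^2+\gamma\|V_\theta-V_{\theta^*}\|_{\rm Dir}^2 .$$ Explicitly, $-\bar g(\theta)=B(\theta-\theta^* )$ with $B=E[\phi(\phi-\gamma\phi')^T]$, $f(\theta)=(\theta-\theta^* )^TB(\theta-\theta^* )$, and $B+B^T=2A$ where $A$ is the symmetric matrix with $f(\theta)=(\theta-\theta^* )^TA(\theta-\theta^* )$; here $\phi=\phi(s)$, $\phi'=\phi(s')$ with $s\sim\pi$ and $s'\sim P(s,\cdot)$.
   Context: Setting: finite state space $\mathcal S=[n]$, a fixed policy inducing a transition matrix $P\in\mathbb{R}^{n\times n}$ which is irreducible and aperiodic, with unique stationary distribution $\pi=(\pi_1,\dots,\pi_n)$ (row vector); $D=\mathrm{diag}(\pi_1,\dots,\pi_n)$. Rewards $r(s,a,s')$ are deterministic and bounded, $r(s,s')=\sum_a\mu(s,a)r(s,a,s')$ where $\mu$ is the policy; $\gamma\in(0,1)$ is the discount factor. Features: $\Phi=[\phi_1,\dots,\phi_K]\in\mathbb{R}^{n\times K}$ has full column rank, $\phi(s)=(\phi_1(s),\dots,\phi_K(s))^T$ with $\|\phi(s)\|_2\le 1$, and $V_\theta=\Phi\theta$ (so $V_\theta(s)=\theta^T\phi(s)$). Norms: $\|V\|_D^2=\sum_s\pi_sV(s)^2$; Dirichlet seminorm $\|V\|_{\rm Dir}^2=\frac12\sum_{s,s'}\pi_sP(s,s')(V(s')-V(s))^2$.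 Mean TD(0) direction: $\bar g(\theta)=\sum_{s,s'}\pi_sP(s,s')\big(r(s,s')+\gamma\phi(s')^T\theta-\phi(s)^T\theta\big)\phi(s)$, and $\theta^*$ is the unique vector with $\bar g(\theta^* )=0$. Gradient splitting: for symmetric PSD $A$ and $f(\theta)=(\theta-a)^TA(\theta-a)$, a linear map $h(\theta)=B(\theta-a)$ is a gradient splitting of $f$ if $B+B^T=2A$. *)

(* Defs.v *)
From mathcomp Require Import all_boot all_order all_algebra.
Set Implicit Arguments. Unset Strict Implicit. Unset Printing Implicit Defensive.
Import Order.TTheory GRing.Theory Num.Theory.
Local Open Scope ring_scope.

Section TD.
Variables (R : realFieldType) (n K : nat).

Definition stochastic (P : 'M[R]_n) : Prop :=
  (forall i j, 0 <= P i j) /\ (forall i, \sum_j P i j = 1).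

Definition irreducible (P : 'M[R]_n) : Prop :=
  forall i j, exists k : nat, 0 < (P ^+ k) i j.

(* aperiodic: every state has period 1, i.e. the gcd of
   {k >= 1 : P^k(i,i) > 0} is 1 (any common divisor of that set is 1) *)
Definition aperiodic (P : 'M[R]_n) : Prop :=
  forall i (d : nat), (forall k : nat, (0 < k)%N -> 0 < (P ^+ k) i i -> (d %| k)%N)
    -> d = 1%N.

Definition stationary_dist (P : 'M[R]_n) (pi : 'rV[R]_n) : Prop :=
  (forall i, 0 <= pi 0 i) /\ \sum_i pi 0 i = 1 /\ pi *m P = pi.

Definition phi (Phi : 'M[R]_(n, K)) (s : 'I_n) : 'cV[R]_K := (row s Phi)^T.

Definition sc (M : 'M[R]_1) : R := M 0 0.

Definition quad (A : 'M[R]_K) (x : 'cV[R]_K) : R := sc (x^T *m A *m x).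

Definition rbar (m : nat) (mu : 'I_n -> 'I_m -> R) (r : 'I_n -> 'I_m -> 'I_n -> R)
  (s s' : 'I_n) : R := \sum_a mu s a * r s a s'.

Definition normD2 (pi : 'rV[R]_n) (V : 'cV[R]_n) : R :=
  \sum_s pi 0 s * V s 0 ^+ 2.

Definition dir2 (P : 'M[R]_n) (pi : 'rV[R]_n) (V : 'cV[R]_n) : R :=
  2^-1 * \sum_s \sum_s' pi 0 s * P s s' * (V s' 0 - V s 0) ^+ 2.

Definition gbar (P : 'M[R]_n) (pi : 'rV[R]_n) (rr : 'I_n -> 'I_n -> R)
  (gamma : R) (Phi : 'M[R]_(n, K)) (theta : 'cV[R]_K) : 'cV[R]_K :=
  \sum_s \sum_s' (pi 0 s * P s s' *
     (rr s s' + gamma * sc ((phi Phi s')^T *m theta) - sc ((phi Phi s)^T *m theta)))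
     *: phi Phi s.

Definition Bmat (P : 'M[R]_n) (pi : 'rV[R]_n) (gamma : R) (Phi : 'M[R]_(n, K))
  : 'M[R]_K :=
  \sum_s \sum_s' (pi 0 s * P s s') *:
     (phi Phi s *m (phi Phi s - gamma *: phi Phi s')^T).

Definition fobj (P : 'M[R]_n) (pi : 'rV[R]_n) (gamma : R) (Phi : 'M[R]_(n, K))
  (thetastar theta : 'cV[R]_K) : R :=
  let V := Phi *m theta - Phi *m thetastar in
  (1 - gamma) * normD2 pi V + gamma * dir2 P pi V.

End TD.

Definition gradient_splitting (R : realFieldType) (K : nat)
  (f : 'cV[R]_K -> R) (h : 'cV[R]_K -> 'cV[R]_K) : Prop :=
  exists (A B : 'M[R]_K) (a : 'cV[R]_K),
    A^T = A /\ (forall x, 0 <= quad A x) /\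
    (forall theta, f theta = quad A (theta - a)) /\
    (forall theta, h theta = B *m (theta - a)) /\
    B + B^T = 2%:R *: A.

(* Main.v *)
Require Import Defs.
From mathcomp Require Import all_boot all_order all_algebra ring lra.
Import Order.TTheory GRing.Theory Num.Theory.
Local Open Scope ring_scope.

Section H.
Variables (R : realFieldType) (n K : nat).

Lemma sc_tr (M : 'M[R]_1) : sc M^T = sc M.
Proof. by rewrite /sc mxE. Qed.

Lemma sc_add (M N : 'M[R]_1) : sc (M + N) = sc M + sc N.
Proof. by rewrite /sc mxE. Qed.
Lemma sc_opp (M : 'M[R]_1) : sc (- M) = - sc M.
Proof. by rewrite /sc mxE. Qed.
Lemma sc_scale c (M : 'M[R]_1) : sc (c *: M) = c * sc M.
Proof. by rewrite /sc mxE. Qed.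

Lemma mul_cv1 (v : 'cV[R]_K) (M : 'M[R]_1) : v *m M = sc M *: v.
Proof.
apply/matrixP => i j; rewrite !mxE big_ord1 (ord1 j) mulrC //.
Qed.

Lemma sc_phi (Phi : 'M[R]_(n, K)) s d : sc ((phi Phi s)^T *m d) = (Phi *m d) s 0.
Proof. by rewrite /phi trmxK -row_mul /sc mxE. Qed.

Lemma quad_tr (M : 'M[R]_K) d : quad M^T d = quad M d.
Proof. by rewrite /quad -[LHS]sc_tr !trmx_mul !trmxK mulmxA. Qed.

Lemma quad_add (M N : 'M[R]_K) d : quad (M + N) d = quad M d + quad N d.
Proof. by rewrite /quad mulmxDr mulmxDl sc_add. Qed.

Lemma quad_scale c (M : 'M[R]_K) d : quad (c *: M) d = c * quad M d.
Proof. by rewrite /quad -scalemxAr -scalemxAl sc_scale. Qed.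

Lemma quad_sum (M : 'M[R]_K) u v :
  quad M (u + v) = quad M u + quad M v + sc (u^T *m M *m v) + sc (v^T *m M *m u).
Proof.
rewrite /quad !linearD /= !mulmxDl !sc_add.
ring.
Qed.

Lemma quad0_eq0 (C : 'M[R]_K) : C^T = C -> (forall d, quad C d = 0) -> C = 0.
Proof.
move=> hs h0.
have key : forall u v, sc (u^T *m C *m v) = 0.
  move=> u v.
  have e : sc (v^T *m C *m u) = sc (u^T *m C *m v).
    by rewrite -[LHS]sc_tr !trmx_mul !trmxK hs mulmxA.
  have := quad_sum C u v; rewrite !h0 e => /eqP.
  rewrite !add0r eq_sym -mulr2n -mulr_natr mulf_eq0 pnatr_eq0 orbF => /eqP //.
apply/matrixP => i j; rewrite mxE.
have := key (delta_mx i 0) (delta_mx j 0).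
by rewrite trmx_delta -rowE -colE /sc !mxE.
Qed.

End H.
Section M.
Variables (R : realFieldType) (n K : nat).
Variables (P : 'M[R]_n) (pi : 'rV[R]_n) (gamma : R) (Phi : 'M[R]_(n, K)).

Definition xx (d : 'cV[R]_K) s := (Phi *m d) s 0.

Lemma Bmul d : Bmat P pi gamma Phi *m d =
  \sum_s \sum_s' (pi 0 s * P s s' * (xx d s - gamma * xx d s')) *: phi Phi s.
Proof.
rewrite /Bmat mulmx_suml; apply eq_bigr => s _.
rewrite mulmx_suml; apply eq_bigr => s' _.
rewrite -scalemxAl -mulmxA mul_cv1 scalerA; congr (_ *: _).
rewrite linearB /= linearZ /= mulmxBl -scalemxAl sc_add sc_opp sc_scale !sc_phi.
by rewrite /xx.
Qed.

Lemma gbar_diff rr th ts :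
  gbar P pi rr gamma Phi th - gbar P pi rr gamma Phi ts =
  - (Bmat P pi gamma Phi *m (th - ts)).
Proof.
rewrite Bmul /gbar -sumrB -sumrN; apply eq_bigr => s _.
rewrite -sumrB -sumrN; apply eq_bigr => s' _.
rewrite -scalerBl -scaleNr !sc_phi /xx !mulmxBr !mxE; congr (_ *: _).
ring.
Qed.

Lemma quadB d : quad (Bmat P pi gamma Phi) d =
  \sum_s \sum_s' pi 0 s * P s s' * (xx d s - gamma * xx d s') * xx d s.
Proof.
rewrite /quad -mulmxA Bmul mulmx_sumr /sc summxE; apply eq_bigr => s _.
rewrite mulmx_sumr summxE; apply eq_bigr => s' _.
rewrite -scalemxAr mxE; congr (_ * _).
by rewrite -/(sc _) -sc_tr trmx_mul !trmxK -row_mul /sc /xx mxE.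
Qed.

Hypothesis stoch : stochastic P.
Hypothesis stat : stationary_dist P pi.

Lemma sum1 (F : 'I_n -> R) :
  \sum_s \sum_s' pi 0 s * P s s' * F s = \sum_s pi 0 s * F s.
Proof.
apply eq_bigr => s _.
rewrite -big_distrl /= -big_distrr /= (proj2 stoch) mulr1 //.
Qed.

Lemma sum2 (F : 'I_n -> R) :
  \sum_s \sum_s' pi 0 s * P s s' * F s' = \sum_s pi 0 s * F s.
Proof.
rewrite exchange_big /=; apply eq_bigr => s' _.
rewrite -big_distrl /=; congr (_ * _).
case: stat => _ [_ e]; by rewrite -{2}e mxE.
Qed.

Lemma fobj_eq ts th : fobj P pi gamma Phi ts th =
  quad (Bmat P pi gamma Phi) (th - ts).
Proof.
rewrite quadB /fobj /normD2 /dir2.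
rewrite -mulmxBr /xx.
set x := fun s => (Phi *m (th - ts)) s 0.
rewrite -/(x _).
change (\sum_s pi 0 s * (Phi *m (th - ts)) s 0 ^+ 2) with (\sum_s pi 0 s * x s ^+ 2).
change (\sum_s \sum_s' pi 0 s * P s s' * ((Phi *m (th - ts)) s' 0 - (Phi *m (th - ts)) s 0) ^+ 2) with (\sum_s \sum_s' pi 0 s * P s s' * (x s' - x s) ^+ 2).
change (\sum_s \sum_s' pi 0 s * P s s' * ((Phi *m (th - ts)) s 0 - gamma * (Phi *m (th - ts)) s' 0) * (Phi *m (th - ts)) s 0) with (\sum_s \sum_s' pi 0 s * P s s' * (x s - gamma * x s') * x s).
have e1 : \sum_s \sum_s' pi 0 s * P s s' * (x s' - x s) ^+ 2 =
  \sum_s \sum_s' pi 0 s * P s s' * (x s' ^+ 2) +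
  \sum_s \sum_s' pi 0 s * P s s' * (x s ^+ 2) -
  2%:R * \sum_s \sum_s' pi 0 s * P s s' * (x s * x s').
  rewrite -big_split /= mulr_sumr -sumrB; apply eq_bigr => s _.
  rewrite -big_split /= mulr_sumr -sumrB; apply eq_bigr => s' _.
  ring.
have e2 : \sum_s \sum_s' pi 0 s * P s s' * (x s - gamma * x s') * x s =
  \sum_s \sum_s' pi 0 s * P s s' * (x s ^+ 2) -
  gamma * \sum_s \sum_s' pi 0 s * P s s' * (x s * x s').
  rewrite mulr_sumr -sumrB; apply eq_bigr => s _.
  rewrite mulr_sumr -sumrB; apply eq_bigr => s' _.
  ring.
have s1 := sum1 (fun s => x s ^+ 2); have s2 := sum2 (fun s => x s ^+ 2).
simpl in s1, s2.
rewrite e1 e2 s1 s2.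
by field.
Qed.

End M.

Lemma fobj_ge0 (R : realFieldType) (n K : nat) (P : 'M[R]_n) (pi : 'rV[R]_n) gamma
  (Phi : 'M[R]_(n, K)) ts th :
  stochastic P -> stationary_dist P pi -> 0 < gamma < 1 ->
  0 <= fobj P pi gamma Phi ts th.
Proof.
move=> [hP _] [hpi _] /andP[g0 g1].
rewrite /fobj /normD2 /dir2.
apply: addr_ge0; apply: mulr_ge0.
- by rewrite subr_ge0 ltW.
- by apply: sumr_ge0 => s _; apply: mulr_ge0 => //; apply: sqr_ge0.
- exact: ltW.
- apply: mulr_ge0; first by rewrite invr_ge0 ler0n.
  apply: sumr_ge0 => s _; apply: sumr_ge0 => s' _.
  by apply: mulr_ge0; [apply: mulr_ge0|apply: sqr_ge0].
Qed.

Theorem theorem1 (R : realFieldType) (n K m : nat)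
  (P : 'M[R]_n) (pi : 'rV[R]_n)
  (mu : 'I_n -> 'I_m -> R) (r : 'I_n -> 'I_m -> 'I_n -> R)
  (gamma : R) (Phi : 'M[R]_(n, K)) (thetastar : 'cV[R]_K) :
  stochastic P -> irreducible P -> aperiodic P -> stationary_dist P pi ->
  (forall s, (forall a, 0 <= mu s a) /\ \sum_a mu s a = 1) ->
  0 < gamma < 1 ->
  \rank Phi = K ->
  (forall s, \sum_k (Phi s k) ^+ 2 <= 1) ->
  gbar P pi (rbar mu r) gamma Phi thetastar = 0 ->
  gradient_splitting (fobj P pi gamma Phi thetastar)
                     (fun theta => - gbar P pi (rbar mu r) gamma Phi theta)
  /\ (forall theta, - gbar P pi (rbar mu r) gamma Phi theta
                    = Bmat P pi gamma Phi *m (theta - thetastar))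
  /\ (forall theta, fobj P pi gamma Phi thetastar theta
                    = quad (Bmat P pi gamma Phi) (theta - thetastar))
  /\ (forall A : 'M[R]_K, A^T = A ->
        (forall theta, fobj P pi gamma Phi thetastar theta = quad A (theta - thetastar)) ->
        Bmat P pi gamma Phi + (Bmat P pi gamma Phi)^T = 2%:R *: A).
Proof.
move=> hst _ _ hstat _ hg _ _ hstar.
set B := Bmat P pi gamma Phi.
have p2 : forall theta, - gbar P pi (rbar mu r) gamma Phi theta = B *m (theta - thetastar).
  move=> theta; have := @gbar_diff _ _ _ P pi gamma Phi (rbar mu r) theta thetastar.
  by rewrite hstar subr0 => ->; rewrite opprK.
have p3 : forall theta, fobj P pi gamma Phi thetastar theta = quad B (theta - thetastar).
  by move=> theta; rewrite (@fobj_eq _ _ _ P pi gamma Phi hst hstat).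
have qBf : forall x, quad B x = fobj P pi gamma Phi thetastar (x + thetastar).
  by move=> x; rewrite p3 addrK.
split; last split => //; last split => //.
- exists (2^-1 *: (B + B^T)), B, thetastar.
  have qA : forall x, quad (2^-1 *: (B + B^T)) x = quad B x.
    move=> x; rewrite quad_scale quad_add quad_tr.
    by field; rewrite ?pnatr_eq0.
  split; first by rewrite linearZ /= linearD /= trmxK addrC.
  split; first by move=> x; rewrite qA qBf; apply: fobj_ge0.
  split; first by move=> th; rewrite qA p3.
  split; first by [].
  by rewrite scalerA divff ?scale1r // pnatr_eq0.
- move=> A hA hf.
  have hC : B + B^T + (- 2%:R) *: A = 0.
    apply: quad0_eq0.
      apply/matrixP => i j; have := congr1 (fun M : 'M[R]_K => M i j) hA.
      rewrite !mxE => ->; ring.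
    move=> d; rewrite quad_add quad_scale quad_add quad_tr.
    have := hf (d + thetastar); rewrite addrK -qBf => ->.
    ring.
  move/eqP: hC; rewrite addr_eq0 => /eqP ->.
  by rewrite -scaleNr opprK.
Qed.
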